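(* Let $\mathbf L$ be a locally compact non-discrete non-Archimedean field. Each ultrauniform space $(X,\mathbf P)$ has a topological embedding into $\prod_{\rho\in\mathbf P}B(c_0(\mathbf L,A_\rho),0,1)$ and a uniform embedding into $\prod_{\rho\in\mathbf P}c_0(\mathbf L,A_\rho)$, where $\mathrm{card}(A_\rho)=w(X_\rho)$.
   Context: An ultrauniform space $(X,\mathbf P)$ is a set with the uniformity generated by a family $\mathbf P$ of pseudoultrametrics. For $\rho\in\mathbf P$, $R_\rho$ is the equivalence relation $x R_\rho y\iff\rho(x,y)=0$ and $X_\rho$ is the completion of the ultrametric space $X/R_\rho$ (with the metric induced by $\rho$); $w$ denotes topological weight. $c_0(\mathbf L,A)$ is the Banach space of families in $\mathbf L$ indexed by $A$ tending to zero (for each $b>0$ only finitely many coordinates of absolute value $\ge b$) with sup norm, and $B(c_0(\mathbf L,A),0,1)$ its closed unit ball. *)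

(* Defs.v *)
From HB Require Import structures.
From mathcomp Require Import all_boot all_order all_algebra.
From mathcomp Require Import all_classical all_reals all_analysis.
Set Implicit Arguments. Unset Strict Implicit. Unset Printing Implicit Defensive.
Import Order.TTheory GRing.Theory Num.Theory.
Import numFieldNormedType.Exports.
Local Open Scope classical_set_scope.
Local Open Scope ring_scope.

Definition nonarch_abs (R : realType) (L : fieldType) (v : L -> R) : Prop :=
  [/\ forall x, 0 <= v x,
      forall x, v x = 0 <-> x = 0,
      forall x y, v (x * y) = v x * v y &
      forall x y, v (x + y) <= Num.max (v x) (v y)].

Definition Lopen (R : realType) (L : fieldType) (v : L -> R) (U : set L) : Prop :=
  forall x, U x -> exists2 e : R, 0 < e & forall y, v (y - x) < e -> U y.

Definition Lcompact (R : realType) (L : fieldType) (v : L -> R) (K : set L) : Prop :=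
  forall (J : Type) (U : J -> set L), (forall j, Lopen v (U j)) ->
    K `<=` \bigcup_j U j ->
    exists F : set J, finite_set F /\ K `<=` \bigcup_(j in F) U j.

Definition Llocally_compact (R : realType) (L : fieldType) (v : L -> R) : Prop :=
  forall x : L, exists K : set L, Lcompact v K /\
    exists2 e : R, 0 < e & [set y | v (y - x) < e] `<=` K.

Definition Lnondiscrete (R : realType) (L : fieldType) (v : L -> R) : Prop :=
  exists x : L, ~ Lopen v [set x].

Definition pseudoultrametric (R : realType) (X : Type) (d : X -> X -> R) : Prop :=
  [/\ forall x, d x x = 0,
      forall x y, 0 <= d x y,
      forall x y, d x y = d y x &
      forall x y z, d x z <= Num.max (d x y) (d y z)].

Definition cauchy_seq (R : realType) (X : Type) (d : X -> X -> R) (s : nat -> X) : Prop :=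
  forall e : R, 0 < e -> exists N : nat,
    forall m n : nat, (N <= m)%N -> (N <= n)%N -> d (s m) (s n) < e.

(* distance of the completion between (classes of) Cauchy sequences *)
Definition compl_dist (R : realType) (X : Type) (d : X -> X -> R) (s t : nat -> X) : R :=
  limn (fun n => d (s n) (t n)).

(* open sets of the completion, viewed on the set of Cauchy sequences *)
Definition compl_open (R : realType) (X : Type) (d : X -> X -> R)
    (U : set (nat -> X)) : Prop :=
  U `<=` cauchy_seq d /\
  forall s, U s -> exists2 e : R, 0 < e &
    forall t, cauchy_seq d t -> compl_dist d s t < e -> U t.

Definition is_base (T : Type) (opn : set T -> Prop) (B : set (set T)) : Prop :=
  (forall V, B V -> opn V) /\
  forall U, opn U -> forall x, U x -> exists V, [/\ B V, V x & V `<=` U].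

Definition has_weight (T : Type) (opn : set T -> Prop) (A : Type) : Prop :=
  (exists B, is_base opn B /\ ([set: A] #= B)%card) /\
  (forall B, is_base opn B -> ([set: A] #<= B)%card).

Definition in_c0 (R : realType) (L : fieldType) (v : L -> R) (A : Type) (u : A -> L) : Prop :=
  forall b : R, 0 < b -> finite_set [set a | b <= v (u a)].

Definition c0norm (R : realType) (L : fieldType) (v : L -> R) (A : Type) (u : A -> L) : R :=
  sup (range (fun a => v (u a))).

(* coordinate pseudometrics generating the product topology / uniformity *)
Definition prod_dist (R : realType) (L : fieldType) (v : L -> R) (I : Type) (A : I -> Type)
    (i : I) (F G : forall j, A j -> L) : R :=
  c0norm v (fun a => F i a - G i a).

(* topological embedding between spaces whose topologies are generated by
   the families of pseudometrics P (on X) and d (on Y) *)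
Definition top_embedding (R : realType) (I J : Type) (X Y : Type)
    (P : I -> X -> X -> R) (d : J -> Y -> Y -> R) (f : X -> Y) : Prop :=
  [/\ injective f,
      forall x (Jf : set J) (e : R), finite_set Jf -> 0 < e ->
        exists (K : set I) (del : R), [/\ finite_set K, 0 < del &
          forall y, (forall k, K k -> P k x y < del) ->
                    forall j, Jf j -> d j (f x) (f y) < e] &
      forall x (K : set I) (del : R), finite_set K -> 0 < del ->
        exists (Jf : set J) (e : R), [/\ finite_set Jf, 0 < e &
          forall y, (forall j, Jf j -> d j (f x) (f y) < e) ->
                    forall k, K k -> P k x y < del]].

Definition unif_embedding (R : realType) (I J : Type) (X Y : Type)
    (P : I -> X -> X -> R) (d : J -> Y -> Y -> R) (f : X -> Y) : Prop :=
  [/\ injective f,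
      forall (Jf : set J) (e : R), finite_set Jf -> 0 < e ->
        exists (K : set I) (del : R), [/\ finite_set K, 0 < del &
          forall x y, (forall k, K k -> P k x y < del) ->
                      forall j, Jf j -> d j (f x) (f y) < e] &
      forall (K : set I) (del : R), finite_set K -> 0 < del ->
        exists (Jf : set J) (e : R), [/\ finite_set Jf, 0 < e &
          forall x y, (forall j, Jf j -> d j (f x) (f y) < e) ->
                      forall k, K k -> P k x y < del]].

(* Main.v *)
Require Import Defs.
From HB Require Import structures.
From mathcomp Require Import all_boot all_order all_algebra.
From mathcomp Require Import all_classical all_reals all_analysis.
From mathcomp Require Import lra.
From Stdlib Require Import ClassicalEpsilon.
Import Order.TTheory GRing.Theory Num.Theory.
Import numFieldNormedType.Exports.
Local Open Scope classical_set_scope.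
Local Open Scope ring_scope.

Set Implicit Arguments. Unset Strict Implicit.
Section Emb.
Variables (R : realType) (X : Type) (rho : X -> X -> R).
Hypothesis hr : pseudoultrametric rho.
Variable (q : R).
Hypotheses (hq0 : 0 < q) (hq1 : q < 1).

Lemma rho_tri x y z : rho x z <= rho x y + rho y z.
Proof.
case: hr => _ h0 _ hu.
apply: le_trans (hu x y z) _; rewrite ge_max.
have := h0 x y; have := h0 y z => a b.
by apply/andP; split; lra.
Qed.

Lemma rho_cvg (s t : nat -> X) : cauchy_seq rho s -> cauchy_seq rho t ->
  cvg ((fun n => rho (s n) (t n)) @ \oo).
Proof.
move=> cs ct; apply: cauchy_cvg; apply: cauchy_exP => e e0.
have e20 : 0 < e / 2 by lra.
have [N1 H1] := cs _ e20; have [N2 H2] := ct _ e20.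
exists (rho (s (maxn N1 N2)) (t (maxn N1 N2))).
exists (maxn N1 N2) => // n /= Hn.
set M := maxn N1 N2.
have hM1 : (N1 <= M)%N by rewrite leq_maxl.
have hM2 : (N2 <= M)%N by rewrite leq_maxr.
have hn1 : (N1 <= n)%N by apply: leq_trans Hn; rewrite leq_maxl.
have hn2 : (N2 <= n)%N by apply: leq_trans Hn; rewrite leq_maxr.
have a1 := H1 _ _ hM1 hn1; have a2 := H2 _ _ hM2 hn2.
case: hr => _ _ hs _.
have b1 := rho_tri (s M) (s n) (t M); have b2 := rho_tri (s n) (t n) (t M).
have c1 := rho_tri (s n) (s M) (t n); have c2 := rho_tri (s M) (t M) (t n).
have e1 := hs (s n) (s M); have e2 := hs (t n) (t M).
suff : `|(rho (s M) (t M) : R) - rho (s n) (t n)| < e by [].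
rewrite ltr_norml; apply/andP; split; lra.
Qed.

Lemma compl_dist_lt (s t : nat -> X) e : cauchy_seq rho s -> cauchy_seq rho t ->
  compl_dist rho s t < e -> exists N, forall n, (N <= n)%N -> rho (s n) (t n) < e.
Proof.
move=> cs ct hlt.
have := cvgr_lt _ (rho_cvg cs ct) _ hlt.
by case=> N _ HN; exists N => n Hn; apply: HN.
Qed.

Definition E k x y := (k = 0)%N \/ rho x y < q ^+ k.

Lemma E0 x y : E 0 x y. Proof. by left. Qed.

Lemma E_refl k x : E k x x.
Proof. case: hr => h0 _ _ _; right; rewrite h0; exact: exprn_gt0. Qed.

Lemma E_sym k x y : E k x y -> E k y x.
Proof. case: hr => _ _ hs _; by case=> [->|h]; [left|right; rewrite hs]. Qed.

Lemma E_trans k x y z : E k x y -> E k y z -> E k x z.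
Proof.
case: hr => _ _ _ hu; case=> [->|h1]; first by left.
case=> [->|h2]; first by left.
by right; apply: le_lt_trans (hu x y z) _; rewrite gt_max h1 h2.
Qed.

Lemma qX_le m n : (n <= m)%N -> q ^+ m <= q ^+ n.
Proof. by move=> h; apply: ler_wiXn2l => //; [exact: ltW|exact: ltW]. Qed.

Lemma E_mono k l x y : (k <= l)%N -> E l x y -> E k x y.
Proof.
move=> hkl; case=> [h|h].
  by left; move: hkl; rewrite h leqn0 => /eqP.
by right; apply: lt_le_trans h _; apply: qX_le.
Qed.

Lemma E_lt k x y : rho x y < q ^+ k -> E k x y.
Proof. by right. Qed.

Variable x0 : X.

Fixpoint rep (k : nat) (x : X) : X :=
  match k with
  | 0%N => x0
  | k'.+1 => if pselect (E k'.+1 (rep k' x) x) then rep k' x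
             else epsilon (inhabits x0) (E k'.+1 x)
  end.

Lemma rep_E k x : E k (rep k x) x.
Proof.
case: k => [|k]; first by left.
rewrite /=; case: pselect => [h|nh]; first exact: h.
apply: E_sym; apply: (epsilon_spec (inhabits x0) (E k.+1 x)).
by exists x; apply: E_refl.
Qed.

Lemma rep_inv k x y : E k x y -> rep k x = rep k y.
Proof.
elim: k => [//|k IH] hxy /=.
rewrite IH; last by apply: E_mono hxy.
have eqE : E k.+1 x = E k.+1 y.
  apply: funext => z; apply: propext; split=> h.
    by apply: E_trans (E_sym hxy) h.
  by apply: E_trans hxy h.
case: pselect => h1; case: pselect => h2 //.
- by exfalso; apply: h2; apply: E_trans h1 hxy.
- by exfalso; apply: h1; apply: E_trans h2 (E_sym hxy).
- by rewrite eqE.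
Qed.

Definition nd k x := ~ E k.+1 (rep k x) x.

Definition cst (p : X) : nat -> X := fun _ => p.

Definition Sset l p : set (nat -> X) :=
  [set s | cauchy_seq rho s /\ exists N, forall n, (N <= n)%N -> E l (s n) p].

Lemma cst_cauchy p : cauchy_seq rho (cst p).
Proof. case: hr => h0 _ _ _; move=> e e0; exists 0%N => m n _ _; by rewrite /cst h0. Qed.

Lemma cst_Sset l p : Sset l p (cst p).
Proof. split; first exact: cst_cauchy. by exists 0%N => n _; apply: E_refl. Qed.

Lemma Sset_open l p : compl_open rho (Sset l p).
Proof.
split; first by move=> s [].
move=> s [cs [N HN]]; exists (q ^+ l); first exact: exprn_gt0.
move=> t ct hlt; split => //.
have [M HM] := compl_dist_lt cs ct hlt.
exists (maxn N M) => n hn.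
apply: E_trans (HN n _); last by apply: leq_trans hn; rewrite leq_maxl.
apply: E_sym; apply: E_lt; apply: HM; by apply: leq_trans hn; rewrite leq_maxr.
Qed.

Lemma Sset_cst l p p' : Sset l p (cst p') -> E l p' p.
Proof. by case=> _ [N HN]; apply: (HN N). Qed.


Variables (A : Type) (B : set (set (nat -> X))).
Hypothesis hB : is_base (compl_open rho) B.
Variable g : A -> set (nat -> X).
Hypothesis hg : set_bij [set: A] B g.

Definition Vch k x := epsilon (inhabits set0)
  (fun V => B V /\ V (cst (rep k.+1 x)) /\ V `<=` Sset k.+1 (rep k.+1 x)).

Lemma Vch_spec k x : B (Vch k x) /\ Vch k x (cst (rep k.+1 x)) /\
   Vch k x `<=` Sset k.+1 (rep k.+1 x).
Proof.
pose P := (fun V : set (nat -> X) => B V /\ V (cst (rep k.+1 x)) /\ V `<=` Sset k.+1 (rep k.+1 x)).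
apply: (epsilon_spec (inhabits set0) P).
case: hB => _ hb.
have [V [BV Vx VU]] := hb _ (Sset_open k.+1 (rep k.+1 x)) _ (cst_Sset k.+1 (rep k.+1 x)).
by exists V.
Qed.

Lemma Vch_mem k x p : Vch k x (cst p) -> E k.+1 p x.
Proof.
move=> h; have [_ [_ sub]] := Vch_spec k x.
have := Sset_cst (sub _ h) => h1.
by apply: E_trans h1 (rep_E _ _).
Qed.

Lemma Vch_inv k x y : E k.+1 x y -> Vch k x = Vch k y.
Proof. by move=> h; rewrite /Vch (rep_inv h). Qed.

Lemma rep_S k x : rep k.+1 x = if pselect (E k.+1 (rep k x) x) then rep k x
             else epsilon (inhabits x0) (E k.+1 x).
Proof. by []. Qed.

Lemma rep_stable k x p : rep k.+1 x = p ->
  forall d, E (k.+1 + d) p x -> rep (k.+1 + d) x = p.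
Proof.
move=> h0; elim=> [|d IH]; first by rewrite addn0.
move=> hE.
have hE' : E (k.+1 + d) p x by apply: E_mono hE; rewrite addnS.
rewrite addnS rep_S; case: pselect => [hh|nh]; first exact: IH.
by exfalso; apply: nh; rewrite (IH hE') -addnS.
Qed.

Lemma Vch_uniq_lt k k' x : (k < k')%N -> nd k x -> nd k' x -> Vch k x <> Vch k' x.
Proof.
move=> hlt _ nd' eqV.
set p := rep k.+1 x.
have [_ [hp _]] := Vch_spec k x.
rewrite eqV in hp.
have hE := Vch_mem hp.
have hd : k' = (k.+1 + (k' - k.+1))%N by rewrite subnKC.
have hrep : rep k' x = p.
  rewrite hd; apply: rep_stable => //.
  by rewrite -hd; apply: E_mono hE.
by apply: nd'; rewrite hrep.
Qed.

Lemma Vch_uniq k k' x : nd k x -> nd k' x -> Vch k x = Vch k' x -> k = k'.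
Proof.
move=> n1 n2 eqV; case: (ltngtP k k') => // h.
- by exfalso; apply: (Vch_uniq_lt h n1 n2).
- by exfalso; apply: (Vch_uniq_lt h n2 n1); rewrite eqV.
Qed.

Definition kopt x a : option nat :=
  if pselect (exists k, nd k x /\ Vch k x = g a) is left _
  then Some (xget 0%N (fun k => nd k x /\ Vch k x = g a)) else None.

Lemma kopt_spec x a k : kopt x a = Some k -> nd k x /\ Vch k x = g a.
Proof.
rewrite /kopt; case: pselect => // H [<-].
exact: (xgetPex 0%N H).
Qed.

Lemma kopt_none x a : kopt x a = None -> ~ exists k, nd k x /\ Vch k x = g a.
Proof. by rewrite /kopt; case: pselect. Qed.

Lemma kopt_some x a k : nd k x -> Vch k x = g a -> kopt x a = Some k.
Proof.
move=> n1 e1; case E1: (kopt x a) => [k'|].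
  have [n2 e2] := kopt_spec E1.
  by congr Some; apply: (Vch_uniq n2 n1); rewrite e1 e2.
by exfalso; apply: (kopt_none E1); exists k.
Qed.


Variables (L : fieldType) (v : L -> R).
Hypothesis hv : nonarch_abs v.
Variable pi : L.
Hypothesis hpi : v pi = q.

Lemma v0 : v 0 = 0.
Proof. by case: hv => _ h _ _; apply/h. Qed.

Lemma v1 : v 1 = 1.
Proof.
case: hv => hge h hm _.
have h1 : v 1 <> 0 by move/h => /eqP; rewrite oner_eq0.
have := hm 1 1; rewrite mulr1 => e.
have : v 1 * (v 1 - 1) = 0 by rewrite mulrBr mulr1 -e subrr.
move/eqP; rewrite mulf_eq0 => /orP[/eqP//|]; rewrite subr_eq0 => /eqP //.
Qed.

Lemma vN z : v (- z) = v z.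
Proof.
case: hv => hge h hm _.
have e : v (-1) * v (-1) = 1 by rewrite -hm mulrNN mulr1 v1.
have hn := hge (-1).
have e1 : v (-1) = 1 by nra.
by rewrite -mulN1r hm e1 mul1r.
Qed.

Lemma vB a b : v (a - b) <= Num.max (v a) (v b).
Proof. by case: hv => _ _ _ hu; rewrite -(vN b); apply: hu. Qed.

Lemma vX n : v (pi ^+ n) = q ^+ n.
Proof.
case: hv => _ _ hm _.
elim: n => [|n IH]; first by rewrite !expr0 v1.
by rewrite !exprS hm IH hpi.
Qed.

Definition h x a : L := if kopt x a is Some k then pi ^+ k.+1 else 0.

Lemma vh x a : v (h x a) = if kopt x a is Some k then q ^+ k.+1 else 0.
Proof. by rewrite /h; case: (kopt x a) => [k|]; [rewrite vX|rewrite v0]. Qed.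

Lemma transfer M x y k : E M x y -> (k < M)%N -> nd k x ->
  nd k y /\ Vch k y = Vch k x.
Proof.
move=> hE hk ndx.
have hE1 : E k.+1 x y by apply: E_mono hE.
have hE0 : E k x y by apply: E_mono hE; apply: ltnW.
have er := rep_inv hE0.
split; last by rewrite (Vch_inv hE1).
move=> hy; apply: ndx; rewrite er.
by apply: E_trans hy (E_sym hE1).
Qed.

Lemma vh_le x a N : ~ (exists k, kopt x a = Some k /\ (k < N)%N) ->
  v (h x a) <= q ^+ N.+1.
Proof.
move=> nk; rewrite vh; case E1: (kopt x a) => [k|]; last exact: ltW (exprn_gt0 _ hq0).
apply: qX_le; rewrite ltnS leqNgt; apply/negP => hk.
by apply: nk; exists k.
Qed.

Lemma upper N x y a : E N x y -> v (h x a - h y a) <= q ^+ N.+1.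
Proof.
move=> hE.
have hpos : 0 <= q ^+ N.+1 by exact: ltW (exprn_gt0 _ hq0).
case: (pselect (exists k, kopt x a = Some k /\ (k < N)%N)) => [[k [ek hk]]|nx].
  have [n1 e1] := kopt_spec ek.
  have [n2 e2] := transfer hE hk n1.
  have ek' : kopt y a = Some k by exact: (kopt_some n2 (etrans e2 e1)).
  by rewrite /h ek ek' subrr v0.
case: (pselect (exists k, kopt y a = Some k /\ (k < N)%N)) => [[k [ek hk]]|ny].
  have [n1 e1] := kopt_spec ek.
  have [n2 e2] := transfer (E_sym hE) hk n1.
  by exfalso; apply: nx; exists k; split => //; exact: (kopt_some n2 (etrans e2 e1)).
apply: le_trans (vB _ _) _; rewrite ge_max.
by rewrite (vh_le nx) (vh_le ny).
Qed.

Lemma E_contra j x y z : E j.+1 z x -> E j.+1 z y -> E j.+1 x y.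
Proof. by move=> h1 h2; apply: E_trans (E_sym h1) h2. Qed.

Lemma core j x y : E j x y -> ~ E j.+1 x y -> nd j x ->
  exists a, v (h x a - h y a) = q ^+ j.+1.
Proof.
move=> hE nE ndx.
case: hg => _ ginj gsurj.
have [BV _] := Vch_spec j x.
have [a _ ga] := gsurj _ BV.
exists a.
have ex : kopt x a = Some j by apply: kopt_some.
have ey : kopt y a = None.
  case ey: (kopt y a) => [k|] //.
  have [n1 e1] := kopt_spec ey.
  rewrite ga in e1.
  case: (ltnP k j) => hk.
    have [n2 e2] := transfer (E_sym hE) hk n1.
    by have := Vch_uniq n2 ndx; rewrite e2 e1 => /(_ erefl) => hkj; move: hk; rewrite hkj ltnn.
  exfalso; apply: nE.
  move: hk; rewrite leq_eqVlt => /orP[/eqP hk|hk].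
    subst k.
    have [_ [hp _]] := Vch_spec j x.
    rewrite -e1 in hp.
    exact: E_contra (rep_E _ _) (Vch_mem hp).
  have [_ [hp _]] := Vch_spec k y.
  rewrite e1 in hp.
  apply: E_contra (Vch_mem hp) _.
  by apply: E_mono (rep_E k.+1 y); apply: ltnW.
by rewrite /h ex ey subr0 vX.
Qed.

Lemma lower j x y : ~ E j x y -> exists a, q ^+ j <= v (h x a - h y a).
Proof.
elim: j => [|j IH] nE; first by exfalso; apply: nE; left.
case: (pselect (E j x y)) => hE; last first.
  have [a ha] := IH hE; exists a; apply: le_trans ha; apply: qX_le; exact: leqnSn.
case: (pselect (nd j x)) => ndx.
  by have [a ha] := core hE nE ndx; exists a; rewrite ha.
have ndy : nd j y.
  move=> hy; apply: nE; apply: (@E_contra j x y (rep j x)).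
    by apply: NNPP.
  by rewrite (rep_inv hE).
have [a ha] := core (E_sym hE) (fun e => nE (E_sym e)) ndy.
by exists a; rewrite -vN opprB ha.
Qed.


Lemma qX_small b : 0 < b -> exists K, q ^+ K < b.
Proof.
move=> b0.
have hq : `|q| < 1 by rewrite ger0_norm // ltW.
 
have [K _ HK] := cvgr_lt (FF := eventually_filter) _ (cvg_expr hq) _ b0.
by exists K; apply: HK => /=.
Qed.


Lemma sup_range_le (f : A -> R) M : 0 <= M -> (forall a, f a <= M) ->
  sup (range f) <= M.
Proof.
move=> M0 hf; case: (pselect (exists a : A, True)) => [[a _]|na].
  apply: ge_sup; first by exists (f a), a.
  by move=> _ [a' _ <-].
have -> : range f = set0.
  by apply/seteqP; split => // y [a' _ _]; exfalso; apply: na; exists a'.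
by rewrite sup0.
Qed.

Lemma le_sup_range (f : A -> R) M a : (forall a, f a <= M) -> f a <= sup (range f).
Proof.
move=> hf; apply: ub_le_sup; last by exists a.
by exists M => _ [a' _ <-].
Qed.

Lemma h_c0 x : in_c0 v (h x).
Proof.
move=> b b0.
have [K hK] := qX_small b0.
pose f := fun a => if kopt x a is Some k then k else K.
apply: (@sub_finite_set _ _ (f @^-1` `I_K)); last first.
  apply: finite_preimage; last exact: finite_II.
  move=> a1 a2; rewrite !inE /f /=.
  case e1: (kopt x a1) => [k1|]; last by rewrite ltnn.
  case e2: (kopt x a2) => [k2|]; last by rewrite ltnn.
  move=> _ _ ek; subst k2.
  have [_ g1] := kopt_spec e1; have [_ g2] := kopt_spec e2.
  case: hg => _ ginj _.
  by apply: ginj; rewrite ?inE // -g1 -g2.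
move=> a /=; rewrite vh /f.
case: (kopt x a) => [k|] hb; last by exfalso; move: (lt_le_trans b0 hb); rewrite ltxx.
rewrite /=; rewrite ltnNge; apply/negP => hKk.
have := le_trans hb (qX_le (leq_trans hKk (leqnSn k))).
by rewrite leNgt hK.
Qed.

Lemma vh_le1 x a : v (h x a) <= 1.
Proof.
rewrite vh; case: (kopt x a) => [k|]//; apply: exprn_ile1; exact: ltW.
Qed.

Lemma h_le1 x : c0norm v (h x) <= 1.
Proof. by apply: sup_range_le => // a; apply: vh_le1. Qed.

Lemma h_upper N x y : rho x y < q ^+ N ->
  c0norm v (fun a => h x a - h y a) <= q ^+ N.+1.
Proof.
move=> hr'; apply: sup_range_le; first exact: ltW (exprn_gt0 _ hq0).
by move=> a; apply: upper; apply: E_lt.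
Qed.

Lemma h_lower N x y : q ^+ N <= rho x y ->
  q ^+ N.+1 <= c0norm v (fun a => h x a - h y a).
Proof.
move=> hr'.
have nE : ~ E N.+1 x y.
  case=> // hlt.
  have := le_lt_trans hr' hlt; rewrite exprS.
  have hqN := exprn_gt0 N hq0.
  move=> hh; have : q ^+ N < q ^+ N by apply: lt_trans hh _; rewrite gtr_pMl.
  by rewrite ltxx.
have [a ha] := lower nE.
apply: le_trans ha _.
apply: (@le_sup_range _ (q ^+ 1)) => a'.
exact: (upper a' (E0 x y)).
Qed.

End Emb.

Lemma card_test (X A : Type) (B : set (set (nat -> X))) : ([set: A] #= B)%card -> exists g, set_bij [set: A] B g.
Proof. by move/card_set_bijP. Qed.


Lemma exists_emb (R : realType) (L : fieldType) (v : L -> R) (hv : nonarch_abs v)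
  (pi : L) (q : R) (hpi : v pi = q) (hq0 : 0 < q) (hq1 : q < 1)
  (X : Type) (rho : X -> X -> R) (hr : pseudoultrametric rho) (A : Type)
  (hA : has_weight (compl_open rho) A) :
  exists h : X -> A -> L, (forall x, in_c0 v (h x)) /\ (forall x, c0norm v (h x) <= 1) /\
   (forall N x y, rho x y < q ^+ N -> c0norm v (fun a => h x a - h y a) <= q ^+ N.+1) /\
   (forall N x y, q ^+ N <= rho x y -> q ^+ N.+1 <= c0norm v (fun a => h x a - h y a)).
Proof.
case: (pselect (exists x : X, True)) => [[x0 _]|nX]; last first.
  exists (fun _ _ => 0); split; first by move=> x; exfalso; apply: nX; exists x.
  split; first by move=> x; exfalso; apply: nX; exists x.
  by split=> N x; exfalso; apply: nX; exists x.
case: hA => [[B [hB hAB]] _].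
have [g hg] := card_test hAB.
exists (h rho q x0 B g pi).
split; first by move=> x; apply: (h_c0 rho hq0 hq1 x0 hg hv hpi).
split; first by move=> x; apply: (h_le1 rho hq0 hq1 x0 B g hv hpi).
split=> N x y hxy.
  exact: (h_upper hr hq0 hq1 x0 hB g hv hpi hxy).
exact: (h_lower hr hq0 hq1 x0 hB hg hv hpi hxy).
Qed.

Lemma get_pi (R : realType) (L : fieldType) (v : L -> R) (hv : nonarch_abs v)
  (hnd : Lnondiscrete v) : exists pi : L, 0 < v pi /\ v pi < 1.
Proof.
case: hnd => x nop.
have [y [ny hy]] : exists y, y <> x /\ v (y - x) < 1.
  apply: NNPP => nex; apply: nop => x' ->; exists 1 => // y hy.
  by apply: NNPP => ny; apply: nex; exists y.
exists (y - x); split => //.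
case: hv => hge h0 _ _; rewrite lt_neqAle hge andbT eq_sym; apply/eqP => /h0/eqP.
by rewrite subr_eq0 => /eqP.
Qed.

Theorem corollary2p5 (R : realType) (L : fieldType) (v : L -> R)
  (hv : nonarch_abs v) (hlc : Llocally_compact v) (hnd : Lnondiscrete v)
  (X : Type) (I : Type) (P : I -> X -> X -> R)
  (hP : forall i, pseudoultrametric (P i))
  (hsep : forall x y : X, x <> y -> exists i, P i x y <> 0)
  (A : I -> Type) (hA : forall i, has_weight (compl_open (P i)) (A i)) :
  (exists f : X -> (forall i, A i -> L),
     (forall x i, in_c0 v (f x i) /\ c0norm v (f x i) <= 1) /\
     top_embedding P (prod_dist v (A := A)) f) /\
  (exists g : X -> (forall i, A i -> L),
     (forall x i, in_c0 v (g x i)) /\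
     unif_embedding P (prod_dist v (A := A)) g).
Proof.
have [pi [hq0 hq1]] := get_pi hv hnd.
set q := v pi in hq0 hq1.
have H := fun i => exists_emb hv (erefl q) hq0 hq1 (hP i) (hA i).
pose f := fun x i => projT1 (cid (H i)) x.
have hc0 : forall x i, in_c0 v (f x i) /\ c0norm v (f x i) <= 1.
  move=> x i; have [h1 [h2 _]] := projT2 (cid (H i)); split; [exact: h1|exact: h2].
have hup : forall i N x y, P i x y < q ^+ N -> prod_dist v i (f x) (f y) <= q ^+ N.+1.
  move=> i N x y; have [_ [_ [h3 _]]] := projT2 (cid (H i)); exact: h3.
have hlo : forall i N x y, q ^+ N <= P i x y -> q ^+ N.+1 <= prod_dist v i (f x) (f y).
  move=> i N x y; have [_ [_ [_ h4]]] := projT2 (cid (H i)); exact: h4.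
have small := qX_small hq0 hq1.
have qpos : forall n, 0 < q ^+ n by move=> n; exact: exprn_gt0.
have finj : injective f.
  move=> x y fxy; apply: NNPP => nxy.
  have [i hi] := hsep _ _ nxy.
  have hpos : 0 < P i x y.
    by case: (hP i) => _ hge _ _; rewrite lt_neqAle hge andbT eq_sym; apply/eqP.
  have [N hN] := small _ hpos.
  have h1 := hlo i N x y (ltW hN).
  have [M hM] := small _ (qpos N.+1).
  have h2 : P i y y < q ^+ M by case: (hP i) => h0 _ _ _; rewrite h0.
  have h3 := hup i M y y h2.
  rewrite fxy in h1.
  have h4 : q ^+ M.+1 <= q ^+ M by apply: qX_le => //; exact: leqnSn.
  by have := le_lt_trans (le_trans h1 (le_trans h3 h4)) hM; rewrite ltxx.
have ue2 : forall (Jf : set I) (e : R), finite_set Jf -> 0 < e ->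
        exists (K : set I) (del : R), [/\ finite_set K, 0 < del &
          forall x y, (forall k, K k -> P k x y < del) ->
                      forall j, Jf j -> prod_dist v j (f x) (f y) < e].
  move=> Jf e hJ e0; have [N hN] := small _ e0.
  exists Jf, (q ^+ N); split => // x y hK j hj.
  apply: le_lt_trans (hup j N x y (hK j hj)) _.
  by apply: le_lt_trans hN; apply: qX_le => //; exact: leqnSn.
have ue3 : forall (K : set I) (del : R), finite_set K -> 0 < del ->
        exists (Jf : set I) (e : R), [/\ finite_set Jf, 0 < e &
          forall x y, (forall j, Jf j -> prod_dist v j (f x) (f y) < e) ->
                      forall k, K k -> P k x y < del].
  move=> K del hK d0; have [N hN] := small _ d0.
  exists K, (q ^+ N.+1); split => // x y hJ k hk.
  rewrite ltNge; apply/negP => hd.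
  have := hlo k N x y (le_trans (ltW hN) hd).
  by rewrite leNgt hJ.
split.
  exists f; split => //; split => //.
    move=> x Jf e hJ e0; have [K [del [hK d0 hh]]] := ue2 Jf e hJ e0.
    by exists K, del; split => // y hy; apply: hh.
  move=> x K del hK d0; have [Jf [e [hJ e0 hh]]] := ue3 K del hK d0.
  by exists Jf, e; split => // y hy; apply: hh.
exists f; split; first by move=> x i; case: (hc0 x i).
by split.
Qed.
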